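(* Let $0\le\alpha\le1/L$ and $0\le\beta\le 2/L-\alpha$. Then for all $n\ge1$, $$f(\theta_n)-f(\theta_* )\le\min\Big\{\frac{\|\theta_0-\theta_*\|^2}{\alpha n^2},\ \frac{4\|\theta_0-\theta_*\|^2}{(\alpha+\beta)n}\Big\},$$ where a term with zero denominator is interpreted as $+\infty$.
   Context: Let $H\in\mathbb{R}^{d\times d}$ be symmetric positive definite with largest eigenvalue $L$, $q\in\mathbb{R}^d$, $f(\theta)=\frac12\langle\theta,H\theta\rangle-\langle q,\theta\rangle$, $\theta_*=H^{-1}q$. For parameters $\alpha,\beta\in\mathbb{R}$, given $\theta_0\in\mathbb{R}^d$, set $\theta_1=\theta_0$ and for $n\ge1$ $$\theta_{n+1}=\frac{2n}{n+1}\theta_n-\frac{n-1}{n+1}\theta_{n-1}-\frac{1}{n+1}\Big(n(\alpha+\beta)H(\theta_n-\theta_* )-(n-1)\beta H(\theta_{n-1}-\theta_* )\Big)$$ (equivalently $-\frac{n\alpha+\beta}{n+1}f'(\omega_n)$ with $\omega_n=\frac{n(\alpha+\beta)\theta_n-(n-1)\beta\theta_{n-1}}{n\alpha+\beta}$ when $n\alpha+\beta\ne0$). *)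

(* Defs.v *)
From HB Require Import structures.
From mathcomp Require Import all_boot all_order all_algebra.
Set Implicit Arguments. Unset Strict Implicit. Unset Printing Implicit Defensive.
Import Order.TTheory GRing.Theory Num.Theory.
Local Open Scope ring_scope.

Definition dotv (R : rcfType) (d : nat) (u v : 'cV[R]_d) : R := (u^T *m v) 0 0.

Definition quadf (R : rcfType) (d : nat) (H : 'M[R]_d) (q : 'cV[R]_d)
  (th : 'cV[R]_d) : R := 2^-1 * dotv th (H *m th) - dotv q th.

Definition thstar (R : rcfType) (d : nat) (H : 'M[R]_d) (q : 'cV[R]_d) : 'cV[R]_d :=
  invmx H *m q.

(* One step: given n >= 1, theta_n and theta_{n-1}, produce theta_{n+1}. *)
Definition av_step (R : rcfType) (d : nat) (H : 'M[R]_d) (q : 'cV[R]_d)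
  (alpha beta : R) (n : nat) (thn thn1 : 'cV[R]_d) : 'cV[R]_d :=
  let ts := thstar H q in
  let N := (n%:R : R) in
  let N1 := ((n.-1)%:R : R) in
  (2 * N / (N + 1)) *: thn - (N1 / (N + 1)) *: thn1
  - (N + 1)^-1 *: (N * (alpha + beta) *: (H *m (thn - ts))
                   - N1 * beta *: (H *m (thn1 - ts))).

(* av_pair n = (theta_{n+1}, theta_n), with theta_1 = theta_0. *)
Fixpoint av_pair (R : rcfType) (d : nat) (H : 'M[R]_d) (q : 'cV[R]_d)
  (alpha beta : R) (th0 : 'cV[R]_d) (n : nat) : 'cV[R]_d * 'cV[R]_d :=
  match n with
  | 0 => (th0, th0)
  | m.+1 => let p := av_pair H q alpha beta th0 m in
            (av_step H q alpha beta m.+1 p.1 p.2, p.1)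
  end.

Definition av_theta (R : rcfType) (d : nat) (H : 'M[R]_d) (q : 'cV[R]_d)
  (alpha beta : R) (th0 : 'cV[R]_d) (n : nat) : 'cV[R]_d :=
  (av_pair H q alpha beta th0 n).2.

Definition sym_posdef (R : rcfType) (d : nat) (H : 'M[R]_d) : Prop :=
  H^T = H /\ (forall v : 'cV[R]_d, v != 0 -> 0 < dotv v (H *m v)).

Definition largest_eigenvalue (R : rcfType) (d : nat) (H : 'M[R]_d) (L : R) : Prop :=
  eigenvalue H L /\ (forall a : R, eigenvalue H a -> a <= L).

(* Main.v *)
Require Import Defs.
From HB Require Import structures.
From mathcomp Require Import all_boot all_order all_algebra.
From mathcomp Require Import ring lra spectral sesquilinear.
From mathcomp.real_closed Require Import complex.
Import Order.TTheory GRing.Theory Num.Theory.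
Local Open Scope ring_scope.

Section Scalar.
Variable R : rcfType.

Fixpoint xs (a b : R) (m : nat) : R * R :=
  match m with
  | 0 => (1, 0)
  | m'.+1 => let p := xs a b m' in ((2 - a - b) * p.1 - (1 - b) * p.2, p.1)
  end.

Definition Gf (a b x y : R) : R :=
  (2 - b) * x^+2 + ((2 - b) - (2 - a - b)^+2 * b) * y^+2
  - 2 * (2 - a - b) * (1 - b) * x * y.

Lemma Gf_step (a b x y : R) :
  Gf a b ((2 - a - b) * x - (1 - b) * y) x =
  Gf a b x y - b * ((2 - b)^+2 - (2 - a - b)^+2) * y^+2.
Proof. rewrite /Gf; ring. Qed.

Lemma xsA (a b : R) : 0 <= a -> a <= 1 -> 0 <= b -> a + b <= 2 ->
  forall m, a * (xs a b m).1 ^+ 2 <= 2.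
Proof.
move=> a0 a1 b0 ab2.
have [->|ap] := eqVneq a 0; first by move=> m; rewrite mul0r; lra.
have apos : 0 < a by rewrite lt_neqAle eq_sym ap.
have Gb : forall m, Gf a b (xs a b m).1 (xs a b m).2 <= 2 - b.
  elim=> [|m IH]; first by rewrite /Gf /=; lra.
  rewrite /= Gf_step.
  have h1 : 0 <= b * ((2 - b)^+2 - (2 - a - b)^+2) * (xs a b m).2 ^+ 2.
    apply: mulr_ge0; last exact: sqr_ge0.
    apply: mulr_ge0 => //; nra.
  lra.
move=> m; set x := (xs a b m).1; set y := (xs a b m).2.
have := Gb m; rewrite -/x -/y => G.
set A := (2 - a) * (2 - b).
set B := 2 * ((2 - b) - (2 - a - b)^+2 * b).
set C := 2 * (2 - a - b) * (1 - b).
have Apos : 0 < A by rewrite /A; apply: mulr_gt0; lra.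
have P : 0 <= A * B - C^+2.
  have -> : A * B - C^+2 = 2 * a * (a * (2 - a - (2 - b - a)) + (2 - b - a) *
       (2 + (2 - a - (2 - b - a)) * ((2 - b - a) * a + 1 + (2 - b - a)^+2))).
    rewrite /A /B /C; ring.
  have e0 : 0 <= 2 - b - a by lra.
  have g0 : 0 <= 2 - a - (2 - b - a) by lra.
  apply: mulr_ge0; first lra.
  apply: addr_ge0; first exact: mulr_ge0.
  apply: mulr_ge0 => //; apply: addr_ge0 => //; apply: mulr_ge0 => //.
  apply: addr_ge0; last exact: sqr_ge0.
  apply: addr_ge0; last lra. exact: mulr_ge0.
have Q : 0 <= A * x^+2 + B * y^+2 - 2 * C * x * y.
  have : 0 <= A * (A * x^+2 + B * y^+2 - 2 * C * x * y).
    have -> : A * (A * x^+2 + B * y^+2 - 2 * C * x * y) =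
      (A * x - C * y)^+2 + (A * B - C^+2) * y^+2 by ring.
    apply: addr_ge0; first exact: sqr_ge0.
    apply: mulr_ge0 => //; exact: sqr_ge0.
  by rewrite pmulr_rge0.
have kpos : 0 < 2 - b by lra.
have : a * x^+2 * (2 - b) <= 2 * (2 - b).
  move: Q G; rewrite /A /B /C /Gf => Q G; nra.
by rewrite ler_pM2r.
Qed.

Lemma xs_big_b (a b : R) : 0 <= a -> 0 <= b -> a + b <= 2 -> 1 <= b ->
  forall m, (xs a b m).1 ^+ 2 <= 1.
Proof.
move=> a0 b0 ab2 b1.
suff F : forall m, (xs a b m).1 ^+ 2 + (b - 1) * (xs a b m).2 ^+ 2 <= 1.
  move=> m; have := F m; have := sqr_ge0 (xs a b m).2; nra.
elim=> [|m IH]; first by rewrite /=; lra.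
move: IH; rewrite /=; set x := (xs a b m).1; set y := (xs a b m).2 => IH.
suff E : 0 <= (x ^+ 2 + (b - 1) * y ^+ 2) -
   (((2 - a - b) * x - (1 - b) * y) ^+ 2 + (b - 1) * x ^+ 2) by lra.
set tau := b - 1; set s := 2 - a - b.
have t0 : 0 <= tau by rewrite /tau; lra.
have t1 : tau <= 1 by rewrite /tau; lra.
have s0 : 0 <= s by rewrite /s; lra.
have s1 : s <= 1 - tau by rewrite /s /tau; lra.
have key : (1 - tau) * ((x ^+ 2 + tau * y ^+ 2) - ((s * x + tau * y) ^+ 2 + tau * x ^+ 2))
   = tau * ((1 - tau) * y - s * x) ^+ 2 + ((1 - tau)^+2 - s^+2) * x^+2 by ring.
have -> : (1 - b) = - tau by rewrite /tau; ring.
rewrite mulNr opprK.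
have [tlt|teq] := ltP tau 1.
  have : 0 <= (1 - tau) * ((x ^+ 2 + tau * y ^+ 2) - ((s * x + tau * y) ^+ 2 + tau * x ^+ 2)).
    rewrite key; apply: addr_ge0; first by apply: mulr_ge0 => //; exact: sqr_ge0.
    apply: mulr_ge0; last exact: sqr_ge0.
    have -> : (1 - tau)^+2 - s^+2 = (1 - tau - s) * (1 - tau + s) by ring.
    apply: mulr_ge0; lra.
  by rewrite pmulr_rge0 ?subr_gt0.
have tau1 : tau = 1 by apply/le_anti; rewrite t1 teq.
have -> : s = 0 by lra.
rewrite tau1; nra.
Qed.

Lemma xs_mid_b (a b : R) : 0 <= a -> a <= 1 -> 0 <= b -> b <= 1 -> a <= 2 * b ->
  forall m, (a + b) * (xs a b m).1 ^+ 2 <= 3 * (m.+1)%:R.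
Proof.
move=> a0 a1 b0 b1 ab.
set t := 1 - b.
have t0 : 0 <= t by rewrite /t; lra.
have E : forall m, ((xs a b m).1 - t * (xs a b m).2) ^+ 2 + a * t * (xs a b m).2 ^+ 2 <= 1.
  elim=> [|m IH]; first by rewrite /= mulr0 expr0n /= mulr0 subr0 addr0 expr1n.
  move: IH; rewrite /=; set x := (xs a b m).1; set y := (xs a b m).2 => IH.
  have -> : ((2 - a - b) * x - (1 - b) * y - t * x) ^+ 2 + a * t * x ^+ 2 =
     ((x - t * y) ^+ 2 + a * t * y ^+ 2) - a * (t * (x - y)^+2 + (2 * b - a) * x^+2).
    rewrite /t; ring.
  have : 0 <= a * (t * (x - y)^+2 + (2 * b - a) * x^+2).
    apply: mulr_ge0 => //; apply: addr_ge0; apply: mulr_ge0 => //; try exact: sqr_ge0.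
    lra.
  lra.
have L : forall m, -1 <= (xs a b m).1 - t * (xs a b m).2 <= 1.
  move=> m; have := E m; have := sqr_ge0 (xs a b m).2.
  set l := (xs a b m).1 - t * (xs a b m).2 => h1 h2.
  have h3 : 0 <= a * t * (xs a b m).2 ^+ 2 by apply: mulr_ge0 => //; apply: mulr_ge0.
  apply/andP; split; nra.
have B : forall m, -(m.+1)%:R <= (xs a b m).1 <= (m.+1)%:R /\
                   -1 <= b * (xs a b m).1 <= 1.
  elim=> [|m [/andP [IH1 IH2] /andP [IH3 IH4]]].
    rewrite /= mulr1; split; apply/andP; split; lra.
  have := L m.+1; rewrite /=; set x := (xs a b m).1; set y := (xs a b m).2.
  move: IH1 IH2 IH3 IH4; rewrite -/x => IH1 IH2 IH3 IH4.
  set z := _ * x - _ * y => /andP [L1 L2].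
  have -> : z = (z - t * x) + t * x by ring.
  rewrite -!natr1.
  have m0 : 0 <= (m%:R : R) by rewrite ler0n.
  rewrite -!natr1 in IH1 IH2.
  have t1 : t <= 1 by rewrite /t; lra.
  move: L1 L2; move: (z - t * x) => l L1 L2.
  have h1 : 0 <= t * (x + (m%:R + 1)) by apply: mulr_ge0 => //; lra.
  have h2 : 0 <= t * ((m%:R + 1) - x) by apply: mulr_ge0 => //; lra.
  have h3 : 0 <= (1 - t) * (m%:R + 1) by apply: mulr_ge0; lra.
  have h4 : 0 <= b * (l + 1) by apply: mulr_ge0 => //; lra.
  have h5 : 0 <= b * (1 - l) by apply: mulr_ge0 => //; lra.
  have h6 : 0 <= t * (b * x + 1) by apply: mulr_ge0 => //; lra.
  have h7 : 0 <= t * (1 - b * x) by apply: mulr_ge0 => //; lra.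
  have tb : t + b = 1 by rewrite /t; ring.
  split; apply/andP; split; nra.
move=> m; have [/andP [B1 B2] /andP [B3 B4]] := B m.
have : b * (xs a b m).1 ^+ 2 <= (m.+1)%:R by nra.
nra.
Qed.

Lemma xsB (a b : R) : 0 <= a -> a <= 1 -> 0 <= b -> a + b <= 2 ->
  forall m, (a + b) * (xs a b m).1 ^+ 2 <= 8 * (m.+1)%:R.
Proof.
move=> a0 a1 b0 ab2 m.
have m1 : 1 <= (m.+1)%:R :> R by rewrite ler1n.
have xA := xsA a b a0 a1 b0 ab2 m.
have sq := sqr_ge0 (xs a b m).1.
have [b1|b1] := leP 1 b.
  have := xs_big_b a b a0 b0 ab2 b1 m; nra.
have [ab|ab] := leP a (2 * b).
  have := xs_mid_b a b a0 a1 b0 (ltW b1) ab m; nra.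
nra.
Qed.


Definition sc_step (al be h : R) (n : nat) (p1 p2 : R) : R :=
  let N := (n%:R : R) in
  let N1 := ((n.-1)%:R : R) in
  (2 * N / (N + 1)) * p1 - (N1 / (N + 1)) * p2
  - (N + 1)^-1 * (N * (al + be) * (h * p1) - N1 * be * (h * p2)).

Fixpoint sc_pair (al be h : R) (n : nat) : R * R :=
  match n with
  | 0 => (1, 1)
  | m.+1 => let p := sc_pair al be h m in (sc_step al be h m.+1 p.1 p.2, p.1)
  end.

Lemma sc_xs (al be h : R) : forall m,
  (m.+1)%:R * (sc_pair al be h m).1 = (xs (al * h) (be * h) m).1 /\
  m%:R * (sc_pair al be h m).2 = (xs (al * h) (be * h) m).2.
Proof.
elim=> [|m [IH1 IH2]]; first by rewrite /= mulr1 mul0r.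
split; last by rewrite /= IH1.
rewrite /= -IH1 -IH2 /sc_step /=.
rewrite -!natr1.
have nz : (m%:R + 1 + 1 : R) != 0.
  by rewrite !natr1 pnatr_eq0.
field.
by [].
Qed.

Lemma Sfin (al be h L : R) (n : nat) : 0 < L -> 0 <= h -> h <= L ->
  0 <= al -> al <= L^-1 -> 0 <= be -> be <= 2 / L - al -> (1 <= n)%N ->
  let p := (sc_pair al be h n).2 in
  (0 < al -> 2^-1 * h * p ^+ 2 <= (al * (n%:R) ^+ 2)^-1) /\
  (0 < al + be -> 2^-1 * h * p ^+ 2 <= 4 * ((al + be) * n%:R)^-1).
Proof.
move=> L0 h0 hL a0 a1 b0 b1; case: n => [//|m] _ p.
have iL : L^-1 * L = 1 by rewrite mulVf // gt_eqF.
have iL0 : 0 <= L^-1 by rewrite invr_ge0 ltW.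
set a := al * h; set b := be * h.
have aa0 : 0 <= a by apply: mulr_ge0.
have bb0 : 0 <= b by apply: mulr_ge0.
have aa1 : a <= 1.
  have h1 : 0 <= (L^-1 - al) * h by apply: mulr_ge0 => //; lra.
  have h2 : 0 <= L^-1 * (L - h) by apply: mulr_ge0 => //; lra.
  rewrite /a; nra.
have ab2 : a + b <= 2.
  have h1 : 0 <= (2 * L^-1 - (al + be)) * h.
    by apply: mulr_ge0 => //; move: b1; rewrite mulrC; lra.
  have h2 : 0 <= L^-1 * (L - h) by apply: mulr_ge0 => //; lra.
  rewrite /a /b; nra.
set x := (xs a b m).1.
have E : (m.+1)%:R * p = x.
  by have [_ E'] := sc_xs al be h m.+1; rewrite /p E'.
have XA := xsA a b aa0 aa1 bb0 ab2 m; rewrite -/x in XA.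
have XB := xsB a b aa0 aa1 bb0 ab2 m; rewrite -/x in XB.
clearbody p x.
have n0 : 0 < (m.+1)%:R :> R by rewrite ltr0n.
set N := (m.+1)%:R in E n0 XB *.
split => ap.
  rewrite -[X in _ <= X]div1r ler_pdivlMr; last by apply: mulr_gt0 => //; exact: exprn_gt0.
  have -> : 2^-1 * h * p ^+ 2 * (al * N ^+ 2) = 2^-1 * (a * x^+2).
    by rewrite -E /a; ring.
  have t : 2^-1 * (2 : R) = 1 by rewrite mulVf // pnatr_eq0.
  nra.
rewrite ler_pdivlMr; last by apply: mulr_gt0.
have Hb : (a + b) * N * p^+2 <= 8.
  have : N * ((a + b) * N * p^+2) <= N * 8.
    by rewrite (_ : N * ((a + b) * N * p^+2) = (a + b) * x^+2) ?(mulrC N) // -E; ring.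
  by rewrite ler_pM2l.
have -> : 2^-1 * h * p ^+ 2 * ((al + be) * N) = 2^-1 * ((a + b) * N * p^+2).
  by rewrite /a /b; ring.
have t : 2^-1 * (2 : R) = 1 by rewrite mulVf // pnatr_eq0.
nra.
Qed.

End Scalar.
Arguments sc_pair {R}.
Arguments sc_step {R}.
Arguments xs {R}.
Arguments Sfin {R}.

Local Open Scope sesquilinear_scope.

Section Spec.
Set Implicit Arguments.
Variable R : rcfType.
Local Notation C := (R[i]).
Local Notation phi := (real_complex R).

Lemma phi_conj (x : R) : (phi x)^* = phi x.
Proof. apply/CrealP. by rewrite complex_real. Qed.

Lemma Hc_herm (d : nat) (H : 'M[R]_d) : H^T = H ->
  map_mx phi H \is hermsymmx.
Proof.
move=> HT; apply/is_hermitianmxP; rewrite expr0 scale1r.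
apply/matrixP => i j; rewrite !mxE phi_conj.
by rewrite -{1}HT mxE.
Qed.

Lemma Hc_normal (d : nat) (H : 'M[R]_d) : H^T = H ->
  map_mx phi H \is normalmx.
Proof. by move=> HT; apply: hermitian_normalmx; apply: Hc_herm. Qed.

Definition Pm {d : nat} (H : 'M[R]_d) : 'M[C]_d := spectralmx (map_mx phi H).
Definition Xd {d : nat} (H : 'M[R]_d) : 'rV[C]_d := spectral_diag (map_mx phi H).

Lemma PHc (d : nat) (H : 'M[R]_d) : H^T = H ->
  Pm H *m map_mx phi H = diag_mx (Xd H) *m Pm H.
Proof.
move=> HT; have /orthomx_spectralP E := Hc_normal HT.
rewrite /Pm /Xd {2}E !mulmxA mulmxV ?spectral_unit // mul1mx.
by [].
Qed.

Lemma PtP (d : nat) (H : 'M[R]_d) : (Pm H)^t* *m Pm H = 1%:M.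
Proof.
rewrite -invmx_unitary ?spectral_unitarymx //.
by rewrite mulVmx // spectral_unit.
Qed.

Lemma Xreal (d : nat) (H : 'M[R]_d) : H^T = H -> forall i,
  Xd H 0 i = phi (complex.Re (Xd H 0 i)).
Proof.
move=> HT i; have := hermitian_spectral_diag_real (Hc_herm HT).
move=> /mxOverP /(_ 0 i) /complex_realP [k ->] //.
Qed.

Definition wc {d : nat} (H : 'M[R]_d) (u : 'cV[R]_d) : 'cV[C]_d :=
  Pm H *m map_mx phi u.

Lemma dot_wc (d : nat) (H : 'M[R]_d) (u v : 'cV[R]_d) :
  phi (dotv u v) = \sum_i ((wc H u) i 0)^* * (wc H v) i 0.
Proof.
have E : (map_mx phi u)^T = (map_mx phi u)^t*.
  by apply/matrixP => i j; rewrite !mxE phi_conj.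
rewrite /dotv.
have -> : phi ((u^T *m v) 0 0) = (map_mx phi (u^T *m v)) 0 0 by rewrite [RHS]mxE.
rewrite map_mxM -map_trmx E.
have -> : (map_mx phi u)^t* *m map_mx phi v = (wc H u)^t* *m (wc H v).
  rewrite /wc trmx_mul map_mxM mulmxA -[_ *m (Pm H)^t* *m Pm H]mulmxA PtP.
  by rewrite mulmx1.
rewrite mxE; apply: eq_bigr => i _; rewrite !mxE.
by [].
Qed.

Lemma Xeig (d : nat) (H : 'M[R]_d) : H^T = H -> forall i,
  eigenvalue H (complex.Re (Xd H 0 i)).
Proof.
move=> HT i.
suff: eigenvalue (map_mx phi H) (Xd H 0 i).
  by rewrite {1}Xreal // (eigenvalue_map phi).
apply/eigenvalueP; exists (row i (Pm H)).
  rewrite -row_mul PHc // mul_diag_mx.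
  by apply/rowP => j; rewrite !mxE.
apply/eqP => h0.
have : row i (Pm H *m (Pm H)^t*) = 0 by rewrite row_mul h0 mul0mx.
have /unitarymxP -> := spectral_unitarymx (map_mx phi H).
move=> /rowP /(_ i); rewrite !mxE eqxx /=.
by move/eqP; rewrite oner_eq0.
Qed.

Lemma dotv_ge0 (d : nat) (u : 'cV[R]_d) : 0 <= dotv u u.
Proof.
rewrite /dotv mxE; apply: sumr_ge0 => i _; by rewrite mxE -expr2 sqr_ge0.
Qed.

Lemma eig_pos (d : nat) (H : 'M[R]_d) (a : R) : sym_posdef H ->
  eigenvalue H a -> 0 < a.
Proof.
move=> [HT Hp] /eigenvalueP [v vH v0].
have u0 : v^T != 0 by rewrite trmx_eq0.
have Hu : H *m v^T = a *: v^T by rewrite -{1}HT -trmx_mul vH linearZ.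
have := Hp _ u0; rewrite Hu /dotv -scalemxAr mxE -/(dotv v^T v^T).
have := dotv_ge0 v^T; rewrite /dotv => g0 p.
rewrite lt_neqAle; apply/andP; split.
  apply/eqP => a0; move: p; rewrite -a0 mul0r ltxx //.
rewrite leNgt; apply/negP => an.
by move: p; rewrite ltNge mulr_le0_ge0 // ltW.
Qed.

Lemma unit_H (d : nat) (H : 'M[R]_d) : sym_posdef H -> H \in unitmx.
Proof.
move=> [HT Hp]; rewrite unitmxE unitfE; apply/negP => /det0P [v v0 vH].
have u0 : v^T != 0 by rewrite trmx_eq0.
have Hv : H *m v^T = 0 by rewrite -{1}HT -trmx_mul vH trmx0.
have := Hp _ u0; rewrite Hv /dotv mulmx0 mxE ltxx //.
Qed.

Lemma dot_sym (d : nat) (H : 'M[R]_d) : H^T = H -> forall u v : 'cV[R]_d,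
  dotv u (H *m v) = dotv v (H *m u).
Proof.
move=> HT u v; rewrite /dotv.
have E : (u^T *m (H *m v))^T = v^T *m (H *m u).
  by rewrite !trmx_mul trmxK HT mulmxA.
by rewrite -E [RHS]mxE.
Qed.

Lemma gap_eq (d : nat) (H : 'M[R]_d) (q th : 'cV[R]_d) : sym_posdef H ->
  quadf H q th - quadf H q (thstar H q) =
  2^-1 * dotv (th - thstar H q) (H *m (th - thstar H q)).
Proof.
move=> hH; have [HT _] := hH.
have Hts : H *m thstar H q = q by rewrite /thstar mulmxA mulmxV ?unit_H // mul1mx.
set ts := thstar H q.
have dq : forall u, dotv q u = dotv u (H *m ts).
  by move=> u; rewrite (dot_sym HT u ts) -Hts /dotv trmx_mul HT -mulmxA.
rewrite /quadf !dq.
have lin : forall a b c : 'cV[R]_d, dotv (a - b) c = dotv a c - dotv b c.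
  by move=> a b c; rewrite /dotv linearB /= mulmxBl !mxE.
have linr : forall a b c : 'cV[R]_d, dotv a (b - c) = dotv a b - dotv a c.
  by move=> a b c; rewrite /dotv mulmxBr !mxE.
rewrite mulmxBr lin !linr (dot_sym HT ts th).
by field.
Qed.


Lemma wcB (d : nat) (H : 'M[R]_d) (u v : 'cV[R]_d) : wc H (u - v) = wc H u - wc H v.
Proof. by rewrite /wc map_mxB mulmxBr. Qed.

Lemma wcZ (d : nat) (H : 'M[R]_d) (c : R) (u : 'cV[R]_d) : wc H (c *: u) = phi c *: wc H u.
Proof. by rewrite /wc map_mxZ scalemxAr. Qed.

Lemma wcH (d : nat) (H : 'M[R]_d) (u : 'cV[R]_d) : H^T = H ->
  wc H (H *m u) = diag_mx (Xd H) *m wc H u.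
Proof. by move=> HT; rewrite /wc map_mxM mulmxA PHc // -mulmxA. Qed.

Lemma step_err (d : nat) (H : 'M[R]_d) (q : 'cV[R]_d) (al be : R) (m : nat)
  (P1 P2 : 'cV[R]_d) :
  let ts := thstar H q in
  let N := ((m.+1)%:R : R) in let N1 := (m%:R : R) in
  av_step H q al be m.+1 P1 P2 - ts =
  (2 * N / (N + 1)) *: (P1 - ts) - (N1 / (N + 1)) *: (P2 - ts)
  - (N + 1)^-1 *: (N * (al + be) *: (H *m (P1 - ts)) - N1 * be *: (H *m (P2 - ts))).
Proof.
move=> ts N N1; rewrite /av_step -/ts /=.
move: ((N + 1)^-1 *: _) => K.
apply/matrixP => i j; rewrite !mxE.
rewrite /N /N1 -!natr1.
have nz : (m%:R + 1 + 1 : R) != 0 by rewrite !natr1 pnatr_eq0.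
by field.
Qed.


Lemma phiB (x y : R) : phi (x - y) = phi x - phi y.
Proof. exact: rmorphB. Qed.
Lemma phiM (x y : R) : phi (x * y) = phi x * phi y.
Proof. exact: rmorphM. Qed.

Lemma wc_rec (d : nat) (H : 'M[R]_d) (q : 'cV[R]_d) (al be : R) (th0 : 'cV[R]_d) :
  H^T = H -> forall (i : 'I_d) m,
  (wc H ((av_pair H q al be th0 m).1 - thstar H q)) i 0 =
    phi (sc_pair al be (complex.Re (Xd H 0 i)) m).1 * (wc H (th0 - thstar H q)) i 0 /\
  (wc H ((av_pair H q al be th0 m).2 - thstar H q)) i 0 =
    phi (sc_pair al be (complex.Re (Xd H 0 i)) m).2 * (wc H (th0 - thstar H q)) i 0.
Proof.
move=> HT i; elim=> [|m [IH1 IH2]]; first by rewrite /= rmorph1 mul1r.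
split; last by rewrite /= IH1.
rewrite [(av_pair _ _ _ _ _ _).1]/= step_err.
move: IH1 IH2.
set E1 := (av_pair H q al be th0 m).1 - thstar H q.
set E2 := (av_pair H q al be th0 m).2 - thstar H q.
clearbody E1 E2; move: (wc H (th0 - thstar H q)) => W0 IH1 IH2.
rewrite !(wcB, wcZ) !wcH // !mul_diag_mx.
move: IH1 IH2; move: (wc H E1) (wc H E2) => W1 W2 IH1 IH2.
have Xh := Xreal HT i.
set h := complex.Re (Xd H 0 i) in Xh IH1 IH2 *.
rewrite !mxE IH1 IH2 Xh.
rewrite /= /sc_step /=.
rewrite !(phiB, phiM).
by ring.
Qed.


Lemma conjM (x y : C) : (x * y)^* = x^* * y^*.
Proof. exact: rmorphM. Qed.

Lemma phiC (x : R) : phi x = x%:C%C. Proof. by []. Qed.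

Lemma key_bound (d : nat) (H : 'M[R]_d) (q : 'cV[R]_d) (al be : R) (th0 : 'cV[R]_d)
  (n : nat) (c : R) : sym_posdef H ->
  (forall i : 'I_d, 2^-1 * complex.Re (Xd H 0 i) *
      ((sc_pair al be (complex.Re (Xd H 0 i)) n).2) ^+ 2 <= c) ->
  quadf H q (av_theta H q al be th0 n) - quadf H q (thstar H q) <=
    c * dotv (th0 - thstar H q) (th0 - thstar H q).
Proof.
move=> hH hc; have [HT _] := hH.
rewrite gap_eq // -lecR !phiM !(dot_wc H) wcH // !mulr_sumr.
apply: ler_sum => i _.
have [_ E] := wc_rec q al be th0 HT i n.
rewrite /av_theta; move: E.
move: (wc H ((av_pair H q al be th0 n).2 - thstar H q)) (wc H (th0 - thstar H q)) => W W0 E.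
rewrite mul_diag_mx mxE E.
have Xh := Xreal HT i.
set h := complex.Re (Xd H 0 i) in Xh hc *.
set p := (sc_pair al be h n).2.
move: (W0 i 0) => z.
rewrite Xh.
have -> : phi 2^-1 * ((phi p * z)^* * (phi h * (phi p * z))) =
          phi (2^-1 * h * p ^+ 2) * (z^* * z).
  rewrite conjM phi_conj !phiM; ring.
apply: ler_wpM2r; first by rewrite mulrC mul_conjC_ge0.
by rewrite lecR; exact: hc i.
Qed.

End Spec.

Theorem corollary1 (R : rcfType) (d : nat) (H : 'M[R]_d) (q : 'cV[R]_d) (L : R)
  (alpha beta : R) (th0 : 'cV[R]_d)
  (hH : sym_posdef H) (hL : largest_eigenvalue H L)
  (ha0 : 0 <= alpha) (ha1 : alpha <= L^-1)
  (hb0 : 0 <= beta) (hb1 : beta <= 2 / L - alpha) :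
  forall n : nat, (1 <= n)%N ->
    let gap := quadf H q (av_theta H q alpha beta th0 n) - quadf H q (thstar H q) in
    let D := dotv (th0 - thstar H q) (th0 - thstar H q) in
    (0 < alpha -> gap <= D / (alpha * (n%:R) ^+ 2)) /\
    (0 < alpha + beta -> gap <= 4 * D / ((alpha + beta) * n%:R)).
Proof.
move=> n hn gap D.
have [HT _] := hH.
have L0 : 0 < L := eig_pos L hH hL.1.
have hi : forall i : 'I_d, 0 <= complex.Re (Xd R H 0 i) <= L.
  move=> i; have ei := Xeig R HT i.
  by rewrite (ltW (eig_pos _ hH ei)) (hL.2 _ ei).
split => ap.
  rewrite mulrC /gap /D; apply: key_bound => // i.
  have /andP [h0 h1] := hi i.
  exact: (Sfin _ _ _ _ n L0 h0 h1 ha0 ha1 hb0 hb1 hn).1.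
rewrite mulrAC /gap /D; apply: key_bound => // i.
have /andP [h0 h1] := hi i.
exact: (Sfin _ _ _ _ n L0 h0 h1 ha0 ha1 hb0 hb1 hn).2.
Qed.
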